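(* Let $\delta\ge 2$ be an integer and $n\ge \max\{8\delta,\tfrac12\delta^2+2\delta+2\}$. Then for every integer $s$ with $1\le s\le \delta-1$, $$\lambda_1\big(D(K_\delta\vee(K_{n-2\delta}+\delta K_1))\big)<\lambda_1\big(D(K_s\vee(K_{n-s-(\delta-s+1)s}+sK_{\delta-s+1}))\big).$$
   Context: For a connected graph $G$, $D(G)$ is the distance matrix and $\lambda_1(D(G))$ its largest eigenvalue. $K_m$ is the complete graph, $+$ is disjoint union, $sH$ is $s$ disjoint copies of $H$, $\vee$ is the join (disjoint union plus all edges between the two parts). *)

(* Defs.v *)
From HB Require Import structures.
From mathcomp Require Import all_boot all_order all_algebra.
Set Implicit Arguments. Unset Strict Implicit. Unset Printing Implicit Defensive.
Import Order.TTheory GRing.Theory Num.Theory.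

(* A simple graph is a symmetric irreflexive relation
   e : rel T on a finite vertex type T. *)

Definition Kgraph (m : nat) : rel 'I_m := fun x y => x != y.
Arguments Kgraph : clear implicits.

Definition gunion (T1 T2 : finType) (e1 : rel T1) (e2 : rel T2) : rel (T1 + T2) :=
  fun x y => match x, y with
  | inl a, inl b => e1 a b
  | inr a, inr b => e2 a b
  | _, _ => false
  end.

Definition gjoin (T1 T2 : finType) (e1 : rel T1) (e2 : rel T2) : rel (T1 + T2) :=
  fun x y => match x, y with
  | inl a, inl b => e1 a b
  | inr a, inr b => e2 a b
  | _, _ => true
  end.

Definition gcopies (s : nat) (T : finType) (e : rel T) : rel ('I_s * T) :=
  fun x y => (x.1 == y.1) && e x.2 y.2.
Arguments gcopies s [T] e.

Fixpoint reach (T : finType) (e : rel T) (k : nat) (x y : T) : bool :=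
  if k is k'.+1 then reach e k' x y || [exists z, reach e k' x z && e z y]
  else x == y.

(* graph distance: least k with a walk of length k from x to y
   (for connected graphs such k exists and k < #|T|) *)
Definition gdist (T : finType) (e : rel T) (x y : T) : nat :=
  find (fun k => reach e k x y) (iota 0 #|T|).

Definition connectedg (T : finType) (e : rel T) : Prop :=
  forall x y : T, exists k, reach e k x y.

Definition dist_mx (R : nzRingType) (T : finType) (e : rel T) : 'M[R]_#|T| :=
  \matrix_(i, j) ((gdist e (enum_val i) (enum_val j))%:R)%R.

Definition largest_eigenvalue (R : numFieldType) (m : nat) (A : 'M[R]_m) (l : R) : Prop :=
  @eigenvalue R m A l /\ forall l', @eigenvalue R m A l' -> (l' <= l)%R.

Definition lambda1_lt (R : realFieldType) (T1 T2 : finType) (e1 : rel T1) (e2 : rel T2) : Prop :=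
  exists l1 l2 : R, largest_eigenvalue (dist_mx R e1) l1 /\
                    largest_eigenvalue (dist_mx R e2) l2 /\ (l1 < l2)%R.

(* Main.v *)
Require Import Defs.
From mathcomp Require Import all_boot all_order all_algebra ring lra zify.
Set Implicit Arguments. Unset Strict Implicit. Unset Printing Implicit Defensive.
Import Order.TTheory GRing.Theory Num.Theory.

Definition GT (s m t : nat) : finType := ('I_s + ('I_m + 'I_s * 'I_t))%type.
Definition Ge (s m t : nat) : rel (GT s m t) :=
  gjoin (Kgraph s) (gunion (Kgraph m) (gcopies s (Kgraph t))).

Arguments Ge : clear implicits.
Definition dd (s m t : nat) (x y : GT s m t) : nat :=
  match x, y with
  | inl i, inl j => (i != j : nat)
  | inr (inl i), inr (inl j) => (i != j : nat)
  | inr (inr p), inr (inr q) => if p.1 == q.1 then (p.2 != q.2 : nat) else 2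
  | inr (inl _), inr (inr _) => 2
  | inr (inr _), inr (inl _) => 2
  | _, _ => 1
  end.

Lemma card_GT s m t : #|GT s m t| = (s + (m + s * t))%N.
Proof. by rewrite /GT !card_sum card_prod !card_ord. Qed.

Lemma gdist_Ge s m t (x y : GT s m t) : (0 < s)%N -> (3 <= #|GT s m t|)%N ->
  gdist (Ge s m t) x y = dd x y.
Proof.
move=> s0 h3; rewrite /gdist.
have -> : iota 0 #|GT s m t| = [:: 0, 1, 2 & iota 3 (#|GT s m t| - 3)]%N.
  by move: h3; case: #|GT s m t| => [|[|[|k]]] //= _; rewrite !subSS subn0.
have z0 : 'I_s := Ordinal s0.
have r1 u v : reach (Ge s m t) 1 u v = (u == v) || Ge s m t u v.
  rewrite /=; case: eqP => [->|_] //=.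
  apply/existsP/idP => [[z /andP[/eqP -> ->]] //|h]; by exists u; rewrite eqxx.
have r2 u v : reach (Ge s m t) 2 u v.
  have -> : reach (Ge s m t) 2 u v = reach (Ge s m t) 1 u v || [exists z, reach (Ge s m t) 1 u z && Ge s m t z v] by [].
  rewrite r1; case: (boolP ((u == v) || Ge s m t u v)) => // h.
  apply/existsP; exists (inl z0); rewrite r1.
  move: h; case: u => [i|[i|p]]; case: v => [j|[j|q]] //=.
  all: try by case: eqP.
  case: (i =P j) => [->|ne]; first by rewrite eqxx.
  have -> : Kgraph s i j by apply/eqP.
  by rewrite orbT.
have -> : find (fun k => reach (Ge s m t) k x y) [:: 0, 1, 2 & iota 3 (#|GT s m t| - 3)]
   = if x == y then 0 else if Ge s m t x y then 1 else 2.
  have e1 := r1 x y; have e2 := r2 x y; rewrite /= in e1 e2 *; rewrite e2 e1.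
  by case: (x == y) => //=; case: (Ge s m t x y).
case: x => [i|[i|[p1 p2]]]; case: y => [j|[j|[q1 q2]]] //=.
- rewrite /Kgraph /=; case: (i =P j) => [->|ne]; first by rewrite eqxx.
  by case: eqP => [[/ne]|].
- rewrite /Kgraph /=; case: (i =P j) => [->|ne]; first by rewrite eqxx.
  by case: eqP => [[/ne]|].
- rewrite /gcopies /Kgraph /=.
  case: (p1 =P q1) => [<-|n1]; case: (p2 =P q2) => [<-|n2]; rewrite ?eqxx //=.
  + by case: eqP => // -[/n2].
  + by case: eqP => // -[/n1].
  + by case: eqP => // -[/n1].
Qed.

Section SB.
Local Open Scope ring_scope.


Variable R : rcfType.

Lemma sum_ifeq k (j : 'I_k) (u v : R) :
  \sum_(i < k) (if i == j then u else v) = u + v * (k.-1)%:R.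
Proof.
rewrite (bigD1 j) //= eqxx; congr (_ + _).
rewrite (eq_bigr (fun _ => v)); last by move=> i /negPf ->.
by rewrite sumr_const cardC1 card_ord mulr_natr.
Qed.

Lemma sum_neq k (j : 'I_k) (f : R) :
  \sum_(i < k) f * ((i != j : nat)%:R) = f * (k.-1)%:R.
Proof.
rewrite -[RHS]add0r -(sum_ifeq j 0 f); apply: eq_bigr => i _.
by case: (i == j); rewrite /= ?mulr0 ?mulr1.
Qed.

Lemma sum_cst k (f : R) : \sum_(i < k) f = f * k%:R.
Proof. by rewrite sumr_const card_ord mulr_natr. Qed.

Definition Fv (s m t : nat) (a b c : R) (x : GT s m t) : R :=
  match x with inl _ => a | inr (inl _) => b | inr (inr _) => c end.

Lemma sum_dd s m t (a b c : R) (y : GT s m t) :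
  \sum_x Fv a b c x * (dd x y)%:R =
  match y with
  | inl _ => a * (s.-1)%:R + b * m%:R + c * (s * t)%:R
  | inr (inl _) => a * s%:R + b * (m.-1)%:R + c * (2 * (s * t))%:R
  | inr (inr _) => a * s%:R + b * (2 * m)%:R + c * (t.-1 + 2 * (s.-1 * t))%:R
  end.
Proof.
rewrite big_sumType /= big_sumType /=.
have -> : \sum_(p : ('I_s * 'I_t)%type) Fv a b c (inr (inr p) : GT s m t) * (dd (inr (inr p)) y)%:R
  = \sum_(i < s) \sum_(j < t) Fv a b c (inr (inr (i, j)) : GT s m t) * (dd (inr (inr (i, j))) y)%:R.
  rewrite pair_bigA /=; apply: eq_bigr; by case.
case: y => [j|[j|[j1 j2]]] /=.
- rewrite sum_neq !sum_cst !natrM; ring.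
- rewrite sum_neq !sum_cst !natrM; ring.
- rewrite [X in _ + (_ + X)](eq_bigr (fun i : 'I_s => if i == j1 then c * (t.-1)%:R else c * 2 * t%:R)); last first.
    move=> i _; case: (i == j1) => /=; first by rewrite sum_neq.
    by rewrite sum_cst.
  rewrite sum_ifeq !sum_cst !natrD !natrM; ring.
Qed.


End SB.

Section Sec_C.
Local Open Scope ring_scope.

Lemma cw (R : rcfType) (k : nat) (A : 'M[R]_k) (X : 'rV[R]_k) (lam l : R) :
  (forall i j, 0 <= A i j) -> (forall i, 0 < X 0 i) -> X *m A = lam *: X ->
  eigenvalue A l -> l <= lam.
Proof.
move=> A0 X0 XA /eigenvalueP [v vA vn0].
have [i0 vi0] : exists i, v 0 i != 0.
  apply/existsP; apply: contraR vn0 => /existsPn h; apply/eqP/rowP => i.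
  by rewrite !mxE; move/negbNE/eqP: (h i).
pose F i := `|v 0 i| / X 0 i.
have [j _ Hj] := @arg_maxP _ _ _ i0 predT F isT.
set c := F j.
have Hc i : `|v 0 i| <= c * X 0 i.
  by rewrite -ler_pdivrMr //; exact: Hj.
have c0 : 0 < c.
  apply: lt_le_trans (Hj i0 isT); rewrite /F divr_gt0 // normr_gt0 //.
have vj : `|v 0 j| = c * X 0 j by rewrite /c /F divfK // gt_eqF.
have vj0 : 0 < `|v 0 j| by rewrite vj mulr_gt0.
have key : `|l| * `|v 0 j| <= lam * `|v 0 j|.
  have e1 : l * v 0 j = \sum_i v 0 i * A i j.
    by move/rowP/(_ j): vA; rewrite !mxE => <-.
  rewrite -normrM e1.
  apply: le_trans (ler_norm_sum _ _ _) _.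
  apply: (@le_trans _ _ (\sum_i c * X 0 i * A i j)).
    apply: ler_sum => i _; rewrite normrM (ger0_norm (A0 i j)).
    by apply: ler_wpM2r => //.
  have e2 : \sum_i X 0 i * A i j = lam * X 0 j.
    by move/rowP/(_ j): XA; rewrite !mxE.
  under eq_bigr => i _ do rewrite -mulrA.
  rewrite -mulr_sumr e2 vj; lra.
have : `|l| <= lam by rewrite -(ler_pM2r vj0).
by apply: le_trans; rewrite ler_norm.
Qed.

End Sec_C.

Section Sec_D.
Local Open Scope ring_scope.

Lemma lift_eig (R : rcfType) s m t (a b c lam : R) : (0 < s)%N -> (3 <= #|GT s m t|)%N ->
  lam * a = a * (s.-1)%:R + b * m%:R + c * (s * t)%:R ->
  lam * b = a * s%:R + b * (m.-1)%:R + c * (2 * (s * t))%:R ->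
  lam * c = a * s%:R + b * (2 * m)%:R + c * (t.-1 + 2 * (s.-1 * t))%:R ->
  (\row_j Fv a b c (enum_val j)) *m dist_mx R (Ge s m t) = lam *: \row_j Fv a b c (enum_val j).
Proof.
move=> s0 h3 e1 e2 e3; apply/rowP => j; rewrite !mxE.
under eq_bigr => i _ do rewrite !mxE gdist_Ge //.
rewrite -(big_enum_val (A := predT) (fun x => Fv a b c x * (dd x (enum_val j))%:R)).
rewrite sum_dd.
by case: (enum_val j) => [_|[_|_]] /=; rewrite ?e1 ?e2 ?e3.
Qed.

Definition pG (R : rcfType) (S T M x : R) : R :=
  x ^+ 3 + (- 2 * S * T - S + T - M + 3) * x ^+ 2
  + (S ^+ 2 * T - 2 * S * T * M - 5 * S * T - 2 * S - T * M + 2 * T - 2 * M + 3) * x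
  + (S ^+ 2 * T * M + S ^+ 2 * T - 2 * S * T * M - 3 * S * T - S - T * M + T - M + 1).

Lemma natr_pred (R : rcfType) k : (0 < k)%N -> (k.-1)%:R = k%:R - 1 :> R.
Proof. by move=> k0; rewrite -{2}(prednK k0) -natr1 addrK. Qed.

Lemma largest_G (R : rcfType) s m t (lam : R) : (0 < s)%N -> (0 < m)%N -> (0 < t)%N ->
  pG s%:R t%:R m%:R lam = 0 -> (s + m + s * t)%:R - 1 < lam ->
  largest_eigenvalue (dist_mx R (Ge s m t)) lam.
Proof.
move=> s0 m0 t0 hp hl.
have h3 : (3 <= #|GT s m t|)%N.
  rewrite card_GT; rewrite -(prednK s0) -(prednK m0) -(prednK t0) /=; lia.
set S : R := s%:R; set M : R := m%:R; set T : R := t%:R.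
have S1 : 1 <= S by rewrite /S ler1n.
have M1 : 1 <= M by rewrite /M ler1n.
have T1 : 1 <= T by rewrite /T ler1n.
have hl' : S + M + S * T - 1 < lam by move: hl; rewrite !natrD natrM.
set a := S * T * (lam + M + 1).
set b := S * T * (2 * lam - S + 2).
set c := (lam - S + 1) * (lam - M + 1) - M * S.
have ST1 : 1 <= S * T by nra.
have a0 : 0 < a by rewrite /a; apply: mulr_gt0; [apply: mulr_gt0|]; lra.
have b0 : 0 < b by rewrite /b; apply: mulr_gt0; [apply: mulr_gt0|]; lra.
have hx : M < lam - S + 1 by lra.
have hy : S < lam - M + 1 by lra.
have c0 : 0 < c by rewrite /c; nra.
have XA := @lift_eig R s m t a b c lam s0 h3.
rewrite !natr_pred // !natrD !natrM !natr_pred // in XA.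
pose X : 'rV[R]_#|GT s m t| := \row_j Fv a b c (enum_val j).
have XA' : X *m dist_mx R (Ge s m t) = lam *: X.
  apply: XA; rewrite -/S -/M -/T /a /b /c.
  - ring.
  - ring.
  - move: hp; rewrite /pG -/S -/M -/T => hp.
    apply/eqP; rewrite -subr_eq0; apply/eqP; rewrite -hp; ring.
have Xpos : forall i, 0 < X 0 i.
  move=> i; rewrite mxE /Fv; by case: (enum_val i) => [?|[?|?]].
split.
  apply/eigenvalueP; exists X => //.
  have i0 : 'I_#|GT s m t| by apply: (@Ordinal _ 0); lia.
  apply/eqP => /rowP /(_ i0); rewrite !mxE => h; have := Xpos i0; rewrite mxE h; lra.
move=> l'; apply: cw XA' => // i j; rewrite mxE; exact: ler0n.
Qed.

End Sec_D.

Section Sec_E.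
Local Open Scope ring_scope.

Lemma cubic_root (R : rcfType) (c2 c1 c0 a : R) :
  a ^+ 3 + c2 * a ^+ 2 + c1 * a + c0 < 0 ->
  exists x, a < x /\ x ^+ 3 + c2 * x ^+ 2 + c1 * x + c0 = 0.
Proof.
move=> ha.
pose K := `|c2| + `|c1| + `|c0|.
pose U := 1 + `|a| + K.
have K0 : 0 <= K by rewrite /K; have := normr_ge0 c2; have := normr_ge0 c1; have := normr_ge0 c0; lra.
have U1 : 1 <= U by rewrite /U; have := normr_ge0 a; lra.
have UK : K + 1 <= U by rewrite /U; have := normr_ge0 a; lra.
have aU : a <= U by rewrite /U; have := ler_norm a; lra.
have pU : 0 <= U ^+ 3 + c2 * U ^+ 2 + c1 * U + c0.
  have h2 : - `|c2| * U ^+ 2 <= c2 * U ^+ 2.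
    rewrite mulNr -normrN -mulNr; apply: ler_wpM2r; first by rewrite exprn_ge0 // ; lra.
    by rewrite -[X in _ <= X]opprK lerN2 ler_norm.
  have h1 : - `|c1| * U <= c1 * U.
    rewrite mulNr -normrN -mulNr; apply: ler_wpM2r; first lra.
    by rewrite -[X in _ <= X]opprK lerN2 ler_norm.
  have h0 : - `|c0| <= c0 by rewrite -[X in _ <= X]opprK lerN2 -normrN ler_norm.
  have u2 : U <= U ^+ 2 by rewrite expr2; nra.
  have u3 : U ^+ 3 = U * U ^+ 2 by rewrite exprS.
  have n1 := normr_ge0 c1; have n0 := normr_ge0 c0; have n2 := normr_ge0 c2.
  have : K * U ^+ 2 <= U * U ^+ 2 - U ^+ 2.
    have : 0 <= U ^+ 2 by rewrite exprn_ge0 //; lra.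
    nra.
  rewrite /K; nra.
pose p : {poly R} := 'X ^+ 3 + c2%:P * 'X ^+ 2 + c1%:P * 'X + c0%:P.
have pE x : p.[x] = x ^+ 3 + c2 * x ^+ 2 + c1 * x + c0.
  by rewrite /p !hornerE.
have hp : p.[a] <= 0 <= p.[U] by rewrite !pE; apply/andP; split; lra.
have [x /andP [ax xU] rx] := @poly_ivt R p a U aU hp.
exists x; split; last by move/eqP: rx; rewrite pE.
rewrite lt_neqAle ax andbT; apply/eqP => eax.
by move/eqP: rx; rewrite pE -eax => h; lra.
Qed.

End Sec_E.

Section Sec_F.
Local Open Scope ring_scope.

Section F.
Variable R : rcfType.

Lemma pG_at (S T M : R) : 1 <= S -> 1 <= T -> 1 <= M -> pG S T M (S + M + S * T - 1) < 0.
Proof.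
move=> S1 T1 M1.
have -> : pG S T M (S + M + S * T - 1) =
  - ((S ^+ 3 * T ^+ 3 - S ^+ 2 * T ^+ 3) + (S ^+ 3 * T ^+ 2 - S ^+ 2 * T ^+ 2)
     + (4 * S ^+ 2 * T ^+ 2 * M - S * T ^+ 2 * M) + 2 * S ^+ 2 * T * M + 3 * S * T * M ^+ 2).
  rewrite /pG; ring.
have ST : 1 <= S * T by nra.
have h1 : 0 <= S ^+ 3 * T ^+ 3 - S ^+ 2 * T ^+ 3.
  have -> : S ^+ 3 * T ^+ 3 - S ^+ 2 * T ^+ 3 = (S - 1) * (S * T) * (S * T) * T by ring.
  apply: mulr_ge0; last lra. apply: mulr_ge0; last lra. apply: mulr_ge0; lra.
have h2 : 0 <= S ^+ 3 * T ^+ 2 - S ^+ 2 * T ^+ 2.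
  have -> : S ^+ 3 * T ^+ 2 - S ^+ 2 * T ^+ 2 = (S - 1) * (S * T) * (S * T) by ring.
  apply: mulr_ge0; last lra. apply: mulr_ge0; lra.
have h3 : 0 <= 4 * S ^+ 2 * T ^+ 2 * M - S * T ^+ 2 * M.
  have -> : 4 * S ^+ 2 * T ^+ 2 * M - S * T ^+ 2 * M = (4 * S - 1) * (S * T) * T * M by ring.
  apply: mulr_ge0; last lra. apply: mulr_ge0; last lra. apply: mulr_ge0; lra.
have h4 : 0 < 2 * S ^+ 2 * T * M + 3 * S * T * M ^+ 2.
  have -> : 2 * S ^+ 2 * T * M + 3 * S * T * M ^+ 2 = (S * T) * (2 * S * M + 3 * M * M) by ring.
  apply: mulr_gt0; first lra. nra.
lra.
Qed.

Definition gg (S E N x : R) : R :=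
  (2 - S) * x ^+ 2
  + (2 * S ^+ 2 * E + 7 * S ^+ 2 + S * E - 2 * S * N - 10 * S - 5 * E + N + 3) * x
  + (- S ^+ 3 * E - 3 * S ^+ 3 + 2 * S ^+ 2 * E + S ^+ 2 * N + 13 * S ^+ 2 + 7 * S * E
     - 4 * S * N - 9 * S + 2 * E ^+ 2 - E * N - 5 * E + N + 1).

Lemma pG_diff (S E N x : R) :
  pG S (E + 1) (N - S - (E + 1) * S) x - pG (S + E) 1 (N - 2 * (S + E)) x = E * gg S E N x.
Proof. rewrite /pG /gg; ring. Qed.

Lemma gg_s1 (E N x : R) : 0 <= E -> 2 * (1 + E) <= N -> 0 < x ->
  pG (1 + E) 1 (N - 2 * (1 + E)) x = 0 -> gg 1 E N x < 0.
Proof.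
move=> E0 hN x0 hp.
pose D := 1 + E.
have id : pG (1 + E) 1 (N - 2 * (1 + E)) x =
   (x + D + 2) * gg 1 E N x + ((5 * D ^+ 2 + 2 * D) * x + (2 * D ^+ 2 * (N - 2 * D) + 2 * D ^+ 2 + D * N + D)).
  rewrite /pG /gg /D; ring.
have D1 : 1 <= D by rewrite /D; lra.
have r0 : 0 < (5 * D ^+ 2 + 2 * D) * x + (2 * D ^+ 2 * (N - 2 * D) + 2 * D ^+ 2 + D * N + D).
  have a1 : 0 < (5 * D ^+ 2 + 2 * D) * x by apply: mulr_gt0 => //; nra.
  have a2 : 0 <= 2 * D ^+ 2 * (N - 2 * D) by apply: mulr_ge0; [nra | rewrite /D; lra].
  have a3 : 0 <= D * N by apply: mulr_ge0; rewrite /D; lra.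
  have a4 : 0 <= D ^+ 2 by nra.
  lra.
have hxD : 0 < x + D + 2 by lra.
rewrite hp in id.
have : (x + D + 2) * gg 1 E N x < 0 by lra.
by rewrite pmulr_rlt0.
Qed.

Lemma gg_s2 (S E N x : R) : 2 <= S -> 1 <= E -> 8 * (S + E) <= N ->
  (S + E) ^+ 2 + 4 * (S + E) + 4 <= 2 * N -> N - 1 <= x -> gg S E N x < 0.
Proof.
move=> S2 E1 hN1 hN2 hx.
set L := N - 1.
have id : gg S E N x = gg S E N L
   + (2 * (2 - S) * L + (2 * S ^+ 2 * E + 7 * S ^+ 2 + S * E - 2 * S * N - 10 * S - 5 * E + N + 3)) * (x - L)
   + (2 - S) * (x - L) ^+ 2.
  rewrite /gg; ring.
have F1 : 2 * S * (E + 2) <= N.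
  have : 0 <= (S - E - 2) ^+ 2 by apply: sqr_ge0.
  nra.
have N0 : 0 < N by lra.
have SN1 : S * (2 * S * (E + 2)) <= S * N by apply: ler_wpM2l; lra.
have SN2 : S * (8 * (S + E)) <= S * N by apply: ler_wpM2l; lra.
have SN3 : (S - 2) * N >= 0 by apply: mulr_ge0; lra.
have F2 : 0 <= (3 * S - 3) * N - (2 * S ^+ 2 * E + 8 * S ^+ 2 + S * E).
  have SE0 : 0 <= S * E by nra.
  nra.
have F3 : 0 < N * (10 * S + 6 * E + 1) - (6 * S ^+ 2 + 6 * S * E + 2 * E ^+ 2).
  have : 8 * (S + E) * (10 * S + 6 * E + 1) <= N * (10 * S + 6 * E + 1).
    by apply: ler_wpM2r => //; lra.
  have SE0 : 0 <= S * E by nra.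
  nra.
have gL : gg S E N L < 0.
  have -> : gg S E N L = - (N * ((3 * S - 3) * N - (2 * S ^+ 2 * E + 8 * S ^+ 2 + S * E)))
     - (N * (10 * S + 6 * E + 1) - (6 * S ^+ 2 + 6 * S * E + 2 * E ^+ 2)) - S ^+ 3 * E - 3 * S ^+ 3.
    rewrite /gg /L; ring.
  have : 0 <= N * ((3 * S - 3) * N - (2 * S ^+ 2 * E + 8 * S ^+ 2 + S * E)) by apply: mulr_ge0; lra.
  have : 0 <= S ^+ 3 * E by apply: mulr_ge0; [apply: exprn_ge0|]; lra.
  have : 0 < S ^+ 3 by apply: exprn_gt0; lra.
  lra.
have gpL : 2 * (2 - S) * L + (2 * S ^+ 2 * E + 7 * S ^+ 2 + S * E - 2 * S * N - 10 * S - 5 * E + N + 3) <= 0.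
  have T1 : (3 * S - 5) * (8 * (S + E)) <= (3 * S - 5) * N by apply: ler_wpM2l; lra.
  have SE0 : 2 <= S * E by nra.
  rewrite /L; nra.
have q : (2 - S) * (x - L) ^+ 2 <= 0.
  rewrite mulr_le0_ge0 //; [lra | exact: sqr_ge0].
have : (2 * (2 - S) * L + (2 * S ^+ 2 * E + 7 * S ^+ 2 + S * E - 2 * S * N - 10 * S - 5 * E + N + 3)) * (x - L) <= 0.
  by rewrite mulr_le0_ge0 // subr_ge0.
lra.
Qed.
End F.

End Sec_F.

Section SecG.

Lemma sqn (s e : nat) : (4 * (s * (e + 2)) <= (s + e + 2) * (s + e + 2))%N.
Proof.
case: (leqP s (e + 2)) => h.
- have -> : (e + 2 = s + (e + 2 - s))%N by lia.
  set k := (e + 2 - s)%N. nia.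
- have -> : (s = (e + 2) + (s - (e + 2)))%N by lia.
  set k := (s - (e + 2))%N. nia.
Qed.

Lemma x1 (s e d n : nat) : d = (s + e)%N -> (d * d + 4 * d + 4 <= 2 * n)%N -> (2 * (s * (e + 2)) <= n)%N.
Proof.
move=> hd h1; have h2 := sqn s e.
have : ((s + e + 2) * (s + e + 2) = d * d + 4 * d + 4)%N by rewrite hd; ring.
lia.
Qed.

Lemma x2 (s e t n : nat) : t = e.+1 -> (2 * (s * (e + 2)) <= n)%N -> (1 <= s)%N ->
  (0 < n - s - t * s)%N /\ n = (n - s - t * s + s + t * s)%N.
Proof.
move=> ht h h1.
have ts : (t * s = s * e + s)%N by rewrite ht; ring.
have : (s * (e + 2) = s * e + 2 * s)%N by ring.
rewrite ts. lia.
Qed.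


Local Open Scope ring_scope.
Lemma mainTheorem5_aux (R : rcfType) (delta n : nat) :
  (2 <= delta)%N ->
  (8 * delta <= n)%N ->
  (* n >= delta^2/2 + 2 delta + 2, multiplied by 2 *)
  (delta ^ 2 + 4 * delta + 4 <= 2 * n)%N ->
  forall s : nat, (1 <= s)%N -> (s <= delta - 1)%N ->
  lambda1_lt R
    (gjoin (Kgraph delta)
           (gunion (Kgraph (n - 2 * delta)) (gcopies delta (Kgraph 1))))
    (gjoin (Kgraph s)
           (gunion (Kgraph (n - s - (delta - s + 1) * s))
                   (gcopies s (Kgraph (delta - s + 1))))).
Proof.
move=> d2 hn1 hn2 s s1 sd.
change (lambda1_lt R (Ge delta (n - 2 * delta) 1)
   (Ge s (n - s - (delta - s + 1) * s) (delta - s + 1))).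
rewrite -mulnn in hn2.
set e := (delta - s)%N.
have e1 : (1 <= e)%N by rewrite /e; lia.
have hd : delta = (s + e)%N by rewrite /e; lia.
set t := (delta - s + 1)%N.
have ht : t = e.+1 by rewrite /t /e; lia.
set m1 := (n - 2 * delta)%N.
set m2 := (n - s - t * s)%N.
have hm1 : n = (m1 + 2 * delta)%N by rewrite /m1; lia.
have m10 : (0 < m1)%N by rewrite /m1; lia.
have sq2 := x1 hd hn2.
have [m20 hm2] := x2 ht sq2 s1.
rewrite -/m2 in m20 hm2.
set S : R := s%:R; set E : R := e%:R; set N : R := n%:R.
have S1 : 1 <= S by rewrite /S ler1n.
have E1 : 1 <= E by rewrite /E ler1n.
have hD : delta%:R = S + E :> R by rewrite hd natrD.
have hT : t%:R = E + 1 :> R by rewrite ht -addn1 natrD.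
have hM1 : m1%:R = N - 2 * (S + E) :> R.
  by rewrite /N hm1 natrD natrM hD; ring.
have hM2 : m2%:R = N - S - (E + 1) * S :> R.
  by rewrite /N {1}hm2 !natrD natrM hT; ring.
have T1 : 1%:R = 1 :> R by [].
have p1a : pG (delta%:R) (1%:R) (m1%:R) ((delta + m1 + delta * 1)%:R - 1) < 0 :> R.
  rewrite !natrD natrM; apply: pG_at; rewrite ?ler1n //; lia.
have [l1 [hl1 pl1]] := cubic_root p1a.
have L1 : largest_eigenvalue (dist_mx R (Ge delta m1 1)) l1.
  apply: largest_G => //; first lia.
have hN1 : N - 1 < l1.
  move: hl1; rewrite !natrD natrM hD hM1 T1 mulr1; lra.
have p1z : pG (S + E) 1 (N - 2 * (S + E)) l1 = 0.
  have p1z : pG delta%:R 1 m1%:R l1 = 0 := pl1.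
  by rewrite hD hM1 in p1z.
have gneg : gg S E N l1 < 0.
  case: (ltngtP s 1) => hs; first lia.
  - apply: gg_s2.
    + by rewrite /S (ler_nat R 2 s).
    + exact: E1.
    + have : ((8 * delta)%:R <= n%:R :> R) by rewrite ler_nat.
      by rewrite natrM hD.
    + have : ((delta * delta + 4 * delta + 4)%:R <= (2 * n)%:R :> R) by rewrite ler_nat.
      rewrite !natrD !natrM hD expr2 -/N; lra.
    + lra.
  - have S1' : S = 1 by rewrite /S hs.
    rewrite S1'; apply: gg_s1.
    + lra.
    + have : ((8 * delta)%:R <= n%:R :> R) by rewrite ler_nat.
      rewrite natrM hD -/N S1'; lra.
    + have : 1 <= N by rewrite /N ler1n; lia.
      lra.
    + by move: p1z; rewrite S1'.
have p2a : pG (s%:R) (t%:R) (m2%:R) l1 < 0 :> R.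
  rewrite hT hM2 -/S.
  have := pG_diff S E N l1; rewrite p1z subr0 => ->.
  by rewrite pmulr_rlt0 //; lra.
have [l2 [hl2 pl2]] := cubic_root p2a.
have L2 : largest_eigenvalue (dist_mx R (Ge s m2 t)) l2.
  apply: largest_G => //; first lia.
  by rewrite !natrD natrM hM2 hT -/S; lra.
by exists l1, l2.
Qed.

End SecG.

Theorem mainTheorem5 (R : rcfType) (delta n : nat) :
  (2 <= delta)%N ->
  (8 * delta <= n)%N ->
  (* n >= delta^2/2 + 2 delta + 2, multiplied by 2 *)
  (delta ^ 2 + 4 * delta + 4 <= 2 * n)%N ->
  forall s : nat, (1 <= s)%N -> (s <= delta - 1)%N ->
  lambda1_lt R
    (gjoin (Kgraph delta)
           (gunion (Kgraph (n - 2 * delta)) (gcopies delta (Kgraph 1))))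
    (gjoin (Kgraph s)
           (gunion (Kgraph (n - s - (delta - s + 1) * s))
                   (gcopies s (Kgraph (delta - s + 1))))).
Proof.
exact: mainTheorem5_aux.
Qed.
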